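(* Let $\mathcal{X}$ be a finite set with $|\mathcal{X}|=r\geq 2$, let $P_X$ be a probability mass function on $\mathcal{X}$ with $P_X(x)>0$ for all $x$, let $f:\mathcal{X}\to\mathcal{Z}=\{0,1\}$ be a given mapping, and fix an integer $l$ with $1\leq l<r$. Then for every $0\leq\rho\leq 1$, the list $\rho$-privacy satisfies $$\pi^{(l)}(\rho)=\pi_u^{(l)}(\rho)=1-\Big[P_X(\Lambda_\rho)+\rho\sum_{i\in\{0,1\}}P_X\big([f^{-1}(i)\setminus\Lambda_\rho]_{l-|\Lambda_\rho|}\big)\Big],$$ and this value is achieved by an add-noise $\rho$-QR.
   Context: Notation: $f^{-1}(i)=\{x\in\mathcal{X}: f(x)=i\}$. For $A\subseteq\mathcal{X}$ and $0\leq t\leq|A|$, $[A]_t$ denotes a set of $t$ largest $P_X$-probability elements of $A$ (ties broken arbitrarily), with $[A]_0=\emptyset$. For a set $S$, $P_X(S)=\sum_{x\in S}P_X(x)$. A $\rho$-QR ($0\leq\rho\leq1$) is a stochastic matrix $W:\mathcal{X}\to\mathcal{Z}$ with $W(f(x)|x)\geq\rho$ for all $x\in\mathcal{X}$; equivalently a $\mathcal{Z}$-valued random variable $F(X)$ with $P(F(X)=i\mid X=x)=W(i|x)$, $X\sim P_X$. With $\mathcal{L}_l$ the set of $l$-element subsets of $\mathcal{X}$, the list privacy of $W$ is $\pi^{(l)}_\rho(W)=\min_{g:\mathcal{Z}\to\mathcal{L}_l}P(X\notin g(F(X)))=1-\sum_{i\in\mathcal{Z}}\max_{L\in\mathcal{L}_l}\sum_{x\in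 L}P_X(x)W(i|x)$, and list $\rho$-privacy is $\pi^{(l)}(\rho)=\max\{\pi^{(l)}_\rho(W): W\text{ a }\rho\text{-QR}\}$. $\pi_u^{(l)}(\rho)$ is defined as $1-\big[P_X(\Lambda_\rho)+\rho\sum_{i\in\mathcal{Z}}P_X([f^{-1}(i)\setminus\Lambda_\rho]_{\min\{l-|\Lambda_\rho|,|f^{-1}(i)\setminus\Lambda_\rho|\}})\big]$, where $\Lambda_\rho$ denotes a maximizer (not necessarily unique) over subsets $\Lambda\subset\mathcal{X}$ with $0\leq|\Lambda|\leq l$ of $P_X(\Lambda)+\rho\sum_{i\in\mathcal{Z}}P_X\big([f^{-1}(i)\setminus\Lambda]_{\min\{l-|\Lambda|,\,|f^{-1}(i)\setminus\Lambda|\}}\big)$. An add-noise $\rho$-QR is a $\rho$-QR of the form $F(X)=f(X)+N \bmod k$ (here $k=|\mathcal{Z}|=2$), where $N$ is a $\mathcal{Z}$-valued random variable such that $N - f(X) - X$ is a Markov chain; equivalently, its stochastic matrix $W$ has identical rows $W(\cdot|x)$ for all $x$ in the same set $f^{-1}(i)$, $i\in\mathcal{Z}$. *)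

(* Defs.v *)
From HB Require Import structures.
From mathcomp Require Import all_boot all_order all_algebra.
From mathcomp Require Import reals.
Set Implicit Arguments. Unset Strict Implicit. Unset Printing Implicit Defensive.
Import Order.TTheory GRing.Theory Num.Theory.
Local Open Scope ring_scope.

Section Defs.
Variables (R : realType) (X : finType).

Definition PX (P : X -> R) (S : {set X}) : R := \sum_(x in S) P x.

(* P_X([A]_t): mass of a set of t largest-probability elements of A.
   For t <= |A| this equals the maximal mass of a t-subset of A (all masses
   are nonnegative, so the iterated max with initial value 0 is the max).
   For t > |A| we take [A]_t = A (i.e. t is capped at |A|), which is the
   min{.,.} convention of the paper. *)
Definition topmass (P : X -> R) (A : {set X}) (t : nat) : R :=
  \big[Num.max/0]_(S : {set X} | (S \subset A) && (#|S| == minn t #|A|)) PX P S.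

Definition fpre (f : X -> bool) (i : bool) : {set X} := [set x | f x == i].

Definition Gobj (P : X -> R) (f : X -> bool) (l : nat) (rho : R)
    (Lam : {set X}) : R :=
  PX P Lam + rho * \sum_(i : bool) topmass P (fpre f i :\: Lam) (l - #|Lam|).

Definition is_Lambda_rho (P : X -> R) (f : X -> bool) (l : nat) (rho : R)
    (Lam : {set X}) : Prop :=
  (#|Lam| <= l)%N /\
  forall Lam' : {set X}, (#|Lam'| <= l)%N -> Gobj P f l rho Lam' <= Gobj P f l rho Lam.

(* A stochastic matrix W : X -> Z, with Z = {0,1} = bool; W x i = W(i|x). *)
Definition stochastic (W : X -> bool -> R) : Prop :=
  (forall x i, 0 <= W x i) /\ (forall x, \sum_(i : bool) W x i = 1).

Definition is_QR (f : X -> bool) (rho : R) (W : X -> bool -> R) : Prop :=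
  stochastic W /\ forall x, rho <= W x (f x).

Definition is_addnoise_QR (f : X -> bool) (rho : R) (W : X -> bool -> R) : Prop :=
  is_QR f rho W /\ forall x y, f x = f y -> W x = W y.

Definition list_privacy (P : X -> R) (l : nat) (W : X -> bool -> R) : R :=
  1 - \sum_(i : bool)
        \big[Num.max/0]_(L : {set X} | #|L| == l) \sum_(x in L) P x * W x i.

End Defs.

(* Main.v *)
Require Import Defs.
From HB Require Import structures.
From mathcomp Require Import all_boot all_order all_algebra.
From mathcomp Require Import reals.
From mathcomp Require Import lra zify.
Import Order.TTheory GRing.Theory Num.Theory.
Local Open Scope ring_scope.
Set Implicit Arguments. Unset Strict Implicit. Unset Printing Implicit Defensive.

Section Gen.
Variables (R : realType) (X : finType) (P : X -> R).
Hypothesis P0 : forall x, 0 <= P x.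

Lemma card_sum (A : {set X}) : #|A| = (\sum_x (x \in A : nat))%N.
Proof.
rewrite -sum1_card big_mkcond /=; apply: eq_bigr => x _; by case: (x \in A).
Qed.

Lemma extend_set (k : nat) (S A : {set X}) : S \subset A -> ((#|S| <= k) && (k <= #|A|))%N ->
  exists S' : {set X}, [/\ S \subset S', S' \subset A & #|S'| = k].
Proof.
elim: k => [|k IH] SA /andP[Sk kA].
  exists S; split => //; apply/eqP; lia.
have [ek|nk] := eqVneq #|S| k.+1; first by exists S.
have [S'' [h1 h2 h3]] : exists S' : {set X}, [/\ S \subset S', S' \subset A & #|S'| = k].
  by apply: IH => //; apply/andP; split; lia.
have : (0 < #|A :\: S''|)%N by rewrite cardsDS //; lia.
rewrite card_gt0 => /set0Pn [x]; rewrite inE => /andP [xS xA].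
exists (x |: S''); split.
- by apply: subset_trans h1 (subsetUr _ _).
- by rewrite subUset sub1set xA.
- by rewrite cardsU1 xS h3.
Qed.

Lemma PX_sub (S S' : {set X}) : S \subset S' -> PX P S <= PX P S'.
Proof.
move=> /subsetP sub; rewrite /PX [X in X <= _]big_mkcond [X in _ <= X]big_mkcond.
apply: ler_sum => x _; case: ifP => xS; first by rewrite (sub _ xS).
by case: ifP.
Qed.

Lemma PX_ge0 (S : {set X}) : 0 <= PX P S.
Proof. by apply: sumr_ge0 => x _. Qed.

Lemma topmass_ge0 (A : {set X}) (t : nat) : 0 <= topmass P A t.
Proof. exact: bigmax_ge_id. Qed.

Lemma topmass_ge (A : {set X}) (t : nat) (S : {set X}) : S \subset A -> (#|S| <= t)%N -> PX P S <= topmass P A t.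
Proof.
move=> SA St.
have hk : ((#|S| <= minn t #|A|) && (minn t #|A| <= #|A|))%N.
  by rewrite leq_min St subset_leq_card // geq_minr.
have [S' [h1 h2 h3]] := extend_set SA hk.
apply: le_trans (PX_sub h1) _.
by apply: le_bigmax_cond; rewrite h2 h3 eqxx.
Qed.

Lemma topmass_arg (A : {set X}) (t : nat) : exists S : {set X}, [/\ S \subset A, #|S| = minn t #|A| & topmass P A t = PX P S].
Proof.
have hk : ((#|(set0 : {set X})| <= minn t #|A|) && (minn t #|A| <= #|A|))%N.
  by rewrite cards0 geq_minr.
have [S0 [_ h2 h3]] := extend_set (sub0set A) hk.
have hS0 : (S0 \subset A) && (#|S0| == minn t #|A|) by rewrite h2 h3 eqxx.
have [S /andP [h4 /eqP h5] h6] := @eq_bigmax _ _ _ (0:R) S0 (fun S : {set X} => (S \subset A) && (#|S| == minn t #|A|)) (PX P) hS0 (fun _ _ => PX_ge0 _).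
by exists S.
Qed.

End Gen.

Section Lower.
Variables (R : realType) (X : finType) (P : X -> R) (f : X -> bool) (l : nat) (rho : R).
Hypothesis P0 : forall x, 0 <= P x.

Lemma lower_bound (W : X -> bool -> R) (Lam : {set X}) :
  is_QR f rho W -> (#|Lam| <= l)%N -> (l <= #|X|)%N ->
  Gobj P f l rho Lam <=
  \sum_(i : bool) \big[Num.max/0]_(L : {set X} | #|L| == l) \sum_(x in L) P x * W x i.
Proof.
move=> [[W0 W1] Wf] hLam hlX.
have key : forall i, (\sum_x if x \in Lam then P x * W x i else 0)
   + rho * topmass P (fpre f i :\: Lam) (l - #|Lam|) <=
   \big[Num.max/0]_(L : {set X} | #|L| == l) \sum_(x in L) P x * W x i.
  move=> i.
  have [T [hTA hTc hTe]] := topmass_arg P0 (fpre f i :\: Lam) (l - #|Lam|).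
  rewrite hTe.
  have hU : ((#|Lam :|: T| <= l) && (l <= #|[set: X]|))%N.
    rewrite cardsT hlX andbT.
    have := cardsU Lam T; have := geq_minl (l - #|Lam|) #|fpre f i :\: Lam|. lia.
  have [L [hL1 _ hL3]] := extend_set (subsetT (Lam :|: T)) hU.
  have hL : #|L| == l by rewrite hL3.
  have := @le_bigmax_cond _ _ _ (0:R) L (fun L : {set X} => #|L| == l) (fun L : {set X} => \sum_(x in L) P x * W x i) hL.
  move=> HH; apply: le_trans HH => /=.
  rewrite /PX mulr_sumr [X in _ <= X]big_mkcond.
  rewrite (big_mkcond (fun x => x \in T)) -big_split /=.
  apply: ler_sum => x _.
  case: ifPn => xLam.
    have xL : x \in L by apply: (subsetP hL1); rewrite inE xLam.
    have xT : x \notin T.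
      apply/negP => /(subsetP hTA); by rewrite inE xLam.
    by rewrite xL (negbTE xT) addr0.
  case: ifPn => xT.
    have xL : x \in L by apply: (subsetP hL1); rewrite inE xT orbT.
    have := subsetP hTA x xT; rewrite !inE => /andP [_ /eqP fx].
    rewrite xL add0r mulrC; apply: ler_wpM2l => //; rewrite -fx; exact: Wf.
  rewrite addr0; case: ifP => // _.
  by apply: mulr_ge0.
have eqL : (\sum_x if x \in Lam then P x * W x true else 0) +
           (\sum_x if x \in Lam then P x * W x false else 0) = PX P Lam.
  rewrite -big_split /PX [X in _ = X]big_mkcond; apply: eq_bigr => x _.
  case: (x \in Lam) => /=; last by rewrite addr0.
  by rewrite -mulrDr; have := W1 x; rewrite big_bool => ->; rewrite mulr1.
rewrite /Gobj !big_bool /=.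
have := key true; have := key false. rewrite -eqL. lra.
Qed.

End Lower.

Inductive lab := Out | Lm | Tl | Bl.

Section Comb.
Variables (R : realType) (X : finType) (P : X -> R) (f : X -> bool) (l : nat) (rho : R).
Hypothesis P0 : forall x, 0 <= P x.
Hypothesis rho_half : 1 - rho <= rho.
Hypothesis rho1 : rho <= 1.

Definition upd (s : X -> lab) (b : X) (v : lab) : X -> lab :=
  fun x => if x == b then v else s x.

Lemma big_upd_gen (T : Type) (idx : T) (op : Monoid.com_law idx) (F : X -> lab -> T) s b v :
  op (\big[op/idx]_x F x (upd s b v x)) (F b (s b)) = op (\big[op/idx]_x F x (s x)) (F b v).
Proof.
rewrite (bigD1 b) //= [in RHS](bigD1 b) //= /upd eqxx.
rewrite (eq_bigr (fun x => F x (s x))); last by move=> x /negbTE ->.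
rewrite Monoid.mulmAC [in RHS]Monoid.mulmAC.
by congr (op _ _); rewrite Monoid.mulmC.
Qed.

Lemma sumn_upd (F : X -> lab -> nat) s b v :
  (\sum_x F x (upd s b v x) + F b (s b) = \sum_x F x (s x) + F b v)%N.
Proof. exact: big_upd_gen. Qed.

Lemma sumr_upd (F : X -> lab -> R) s b v :
  \sum_x F x (upd s b v x) + F b (s b) = \sum_x F x (s x) + F b v.
Proof. exact: big_upd_gen. Qed.

Lemma sumn_upd2 (F : X -> lab -> nat) s b z vb vz : z != b ->
  (\sum_x F x (upd (upd s b vb) z vz x) + F b (s b) + F z (s z)
   = \sum_x F x (s x) + F b vb + F z vz)%N.
Proof.
move=> zb.
have h1 := sumn_upd F (upd s b vb) z vz.
have h2 := sumn_upd F s b vb.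
have e : upd s b vb z = s z by rewrite /upd (negbTE zb).
rewrite e in h1. lia.
Qed.

Lemma sumr_upd2 (F : X -> lab -> R) s b z vb vz : z != b ->
  \sum_x F x (upd (upd s b vb) z vz x) + F b (s b) + F z (s z)
   = \sum_x F x (s x) + F b vb + F z vz.
Proof.
move=> zb.
have h1 := sumr_upd F (upd s b vb) z vz.
have h2 := sumr_upd F s b vb.
have e : upd s b vb z = s z by rewrite /upd (negbTE zb).
rewrite e in h1. lra.
Qed.

Definition wt (a : lab) : R :=
  match a with Out => 0 | Lm => 1 | Tl => rho | Bl => 1 - rho end.
Definition kap (i : bool) (x : X) (a : lab) : nat :=
  match a with Out => 0 | Lm => 1 | Tl => (f x == i) | Bl => (f x != i) end.
Definition isL (a : lab) : bool := if a is Lm then true else false.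
Definition isB (a : lab) : bool := if a is Bl then true else false.

Definition Vs (s : X -> lab) : R := \sum_x P x * wt (s x).
Definition cnt (i : bool) (s : X -> lab) : nat := (\sum_x kap i x (s x))%N.
Definition nBs (s : X -> lab) : nat := (\sum_x isB (s x))%N.


Hypothesis rho0 : 0 <= rho.
Definition isT (a : lab) : bool := if a is Tl then true else false.

Lemma base (s : X -> lab) : (forall x, isB (s x) = false) ->
  (forall i, (cnt i s <= l)%N) ->
  exists Lam' : {set X}, (#|Lam'| <= l)%N /\ Vs s <= Gobj P f l rho Lam'.
Proof.
move=> nB hc.
pose Lam' := [set x | isL (s x)].
pose T (i : bool) := [set x | isT (s x) && (f x == i)].
have hcnt : forall i, cnt i s = (#|Lam'| + #|T i|)%N.
  move=> i; rewrite /cnt !card_sum.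
  rewrite -[in RHS]big_split /=; apply: eq_bigr => x _.
  rewrite /Lam' /T !inE; have := nB x; by case: (s x).
have hV : Vs s = PX P Lam' + rho * (PX P (T true) + PX P (T false)).
  rewrite /Vs /PX [\sum_(x in Lam') _]big_mkcond [\sum_(x in T true) _]big_mkcond [\sum_(x in T false) _]big_mkcond.
  rewrite -[in RHS]big_split mulr_sumr -[in RHS]big_split /=; apply: eq_bigr => x _.
  rewrite /Lam' /T !inE; have := nB x; case: (s x) => //= _; case: (f x) => /=; lra.
exists Lam'; split.
  have := hc true; rewrite hcnt; lia.
rewrite hV /Gobj big_bool /=.
have hT : forall i, PX P (T i) <= topmass P (fpre f i :\: Lam') (l - #|Lam'|).
  move=> i; apply: topmass_ge => //.
    apply/subsetP => x; rewrite /Lam' /T !inE /isT /isL; case: (s x) => //=.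
  have := hc i; rewrite hcnt; lia.
rewrite lerD2l; apply: ler_wpM2l => //; apply: lerD; exact: hT.
Qed.

Lemma arith1 (a b c : nat) : (a + 1 + c = b + 0 + 0)%N -> (a < b)%N.
Proof. lia. Qed.
Lemma arith2 (a b c d m : nat) : (a + c + d = b + 0 + 1)%N -> (c + d = 1)%N -> (b <= m)%N -> (a <= m)%N.
Proof. lia. Qed.
Lemma arith3 (a b c d m : nat) : (a + c + d = b + 1 + 0)%N -> (c + d = 1)%N -> (b <= m)%N -> (a <= m)%N.
Proof. lia. Qed.

Definition Zp (j : bool) (x : X) (a : lab) : bool :=
  match a with Tl => f x == j | Bl => f x != j | _ => false end.

Lemma step (s : X -> lab) (b : X) : s b = Bl -> (forall i, (cnt i s <= l)%N) ->
  exists s' : X -> lab, [/\ (nBs s' < nBs s)%N, forall i, (cnt i s' <= l)%N & Vs s <= Vs s'].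
Proof.
move=> sb hc.
have r1 := rho1. have r2 := rho_half. have r0 := rho0.
have hPb := P0 b.
have [hlt|hge] := ltnP (cnt (f b) s) l.
  exists (upd s b Tl); split.
  - have h := sumn_upd (fun x a => isB a) s b Tl; cbv beta in h.
    have k1 : (isB (s b) : nat) = 1%N by rewrite sb.
    have k2 : (isB Tl : nat) = 0%N := erefl.
    rewrite k1 k2 in h; rewrite /nBs; lia.
  - move=> i; have h := sumn_upd (kap i) s b Tl.
    have := hc i; rewrite /cnt; move: hlt; rewrite /cnt => hlt.
    case: (eqVneq (f b) i) => e.
      have k1 : kap i b (s b) = 0%N by rewrite sb /kap e eqxx.
      have k2 : kap i b Tl = 1%N by rewrite /kap e eqxx.
      rewrite e in hlt; lia.
    have k1 : kap i b (s b) = 1%N by rewrite sb /kap e.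
    have k2 : kap i b Tl = 0%N by rewrite /kap (negbTE e).
    lia.
  - have h := sumr_upd (fun x a => P x * wt a) s b Tl; cbv beta in h.
    have k1 : wt (s b) = 1 - rho by rewrite sb.
    have k2 : wt Tl = rho := erefl.
    rewrite k1 k2 in h; rewrite /Vs.
    move: h; set A := (\sum_x P x * wt (s x)); set B := (\sum_x P x * wt (upd s b Tl x)) => h.
    have hr : 0 <= rho - (1 - rho) by rewrite subr_ge0.
    have := mulr_ge0 hPb hr.
    lra.
have [z hz] : exists z, Zp (f b) z (s z).
  case: (pickP (fun z => Zp (f b) z (s z))) => [z hz|hn]; first by exists z.
  exfalso.
  have e1 : cnt (f b) s = (\sum_x isL (s x))%N.
    rewrite /cnt; apply: eq_bigr => x _; move: (hn x) => /=; rewrite /Zp; case: (s x) => /= h //; by rewrite h.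
  have e2 : (\sum_x isL (upd s b Lm x) <= cnt (~~ f b) s)%N.
    rewrite /cnt; apply: leq_sum => y _; rewrite /upd; case: ifP => [/eqP ->|_].
      by rewrite sb /=; case: (f b).
    by case: (s y).
  have e3 := sumn_upd (fun x a => isL a) s b Lm; cbv beta in e3.
  have k1 : (isL (s b) : nat) = 0%N by rewrite sb.
  have k2 : (isL Lm : nat) = 1%N := erefl.
  rewrite k1 k2 in e3.
  have := hc (~~ f b); lia.
have zb : z != b by apply/eqP => e; rewrite e sb /Zp eqxx in hz.
have hPz := P0 z.
have [hw0 hw1] : 0 <= wt (s z) /\ wt (s z) <= rho.
  have wB : wt Bl = 1 - rho := erefl. have wT : wt Tl = rho := erefl.
  move: hz; rewrite /Zp; case: (s z) => // _; rewrite ?wB ?wT; split; lra.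
have hk : forall i, (kap i b (s b) + kap i z (s z) = 1)%N.
  move=> i; rewrite sb; move: hz; rewrite /Zp; case: (s z) => //=;
  case: (f b); case: (f z); case: i => //=.
have wb : wt (s b) = 1 - rho by rewrite sb.
have hB : (isB (s b) : nat) = 1%N by rewrite sb.
case: (lerP (P b) (P z)) => hP.
  exists (upd (upd s b Out) z Lm); split.
  - have h := sumn_upd2 (fun x a => isB a) s Out Lm zb; cbv beta in h.
    have k1 : (isB Out : nat) = 0%N := erefl. have k2 : (isB Lm : nat) = 0%N := erefl.
    rewrite ?k1 ?k2 ?hB in h; rewrite /nBs; exact: arith1 h.
  - move=> i; have h := sumn_upd2 (kap i) s Out Lm zb.
    have k1 : kap i b Out = 0%N := erefl. have k2 : kap i z Lm = 1%N := erefl.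
    rewrite k1 k2 in h; exact: arith2 h (hk i) (hc i).
  - have h := sumr_upd2 (fun x a => P x * wt a) s Out Lm zb; cbv beta in h.
    have k1 : wt Out = 0 := erefl. have k2 : wt Lm = 1 := erefl.
    rewrite ?k1 ?k2 ?wb in h; rewrite /Vs.
    move: h; set A := (\sum_x P x * wt (s x)).
    set B := (\sum_x P x * wt (upd (upd s b Out) z Lm x)) => h.
    have p1 : 0 <= (P z - P b) * (1 - rho) by apply: mulr_ge0; lra.
    have p2 : 0 <= P z * (rho - wt (s z)) by apply: mulr_ge0; lra.
    lra.
exists (upd (upd s b Lm) z Out); split.
- have h := sumn_upd2 (fun x a => isB a) s Lm Out zb; cbv beta in h.
  have k1 : (isB Out : nat) = 0%N := erefl. have k2 : (isB Lm : nat) = 0%N := erefl.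
  rewrite ?k1 ?k2 ?hB in h; rewrite /nBs; exact: arith1 h.
- move=> i; have h := sumn_upd2 (kap i) s Lm Out zb.
  have k1 : kap i z Out = 0%N := erefl. have k2 : kap i b Lm = 1%N := erefl.
  rewrite k1 k2 in h; exact: arith3 h (hk i) (hc i).
- have h := sumr_upd2 (fun x a => P x * wt a) s Lm Out zb; cbv beta in h.
  have k1 : wt Out = 0 := erefl. have k2 : wt Lm = 1 := erefl.
  rewrite ?k1 ?k2 ?wb in h; rewrite /Vs.
  move: h; set A := (\sum_x P x * wt (s x)).
  set B := (\sum_x P x * wt (upd (upd s b Lm) z Out x)) => h.
  have p1 : 0 <= (P b - P z) * wt (s z) by apply: mulr_ge0; lra.
  have p2 : 0 <= P b * (rho - wt (s z)) by apply: mulr_ge0; lra.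
  lra.
Qed.

Lemma reach (n : nat) (s : X -> lab) : (nBs s <= n)%N -> (forall i, (cnt i s <= l)%N) ->
  exists Lam' : {set X}, (#|Lam'| <= l)%N /\ Vs s <= Gobj P f l rho Lam'.
Proof.
elim: n s => [|n IH] s hn hc; case: (pickP (fun x => isB (s x))) => [b hb|hnb].
- have sb : s b = Bl by move: hb; case: (s b).
  have [s' [h1 _ _]] := step sb hc; lia.
- exact: base (fun x => hnb x) hc.
- have sb : s b = Bl by move: hb; case: (s b).
  have [s' [h1 h2 h3]] := step sb hc.
  have [Lam' [hL hV]] := IH s' (ltac:(lia)) h2.
  exists Lam'; split => //; exact: le_trans hV.
- exact: base (fun x => hnb x) hc.
Qed.

End Comb.

Set Implicit Arguments. Unset Implicit Arguments.
Theorem theorem2 (R : realType) (X : finType) (P : X -> R) (f : X -> bool)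
    (l : nat) (rho : R) :
  (2 <= #|X|)%N ->
  (forall x, 0 < P x) -> \sum_(x : X) P x = 1 ->
  (1 <= l)%N -> (l < #|X|)%N ->
  0 <= rho -> rho <= 1 ->
  forall Lam : {set X}, is_Lambda_rho P f l rho Lam ->
    let v := 1 - (PX P Lam +
                  rho * \sum_(i : bool) topmass P (fpre f i :\: Lam) (l - #|Lam|)) in
    (forall W, is_QR f rho W -> list_privacy P l W <= v) /\
    (exists W, is_addnoise_QR f rho W /\ list_privacy P l W = v).
Proof.
move=> hX Ppos Psum hl1 hlX rho0 rho1 Lam [hLam hmax] v.
have P0 : forall x, 0 <= P x by move=> x; exact: ltW (Ppos x).
have hlX' : (l <= #|X|)%N by apply: ltnW.
have low := fun W (hW : is_QR f rho W) => lower_bound P0 hW hLam hlX'.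
have Gge : forall L : {set X}, PX P L <= Gobj P f l rho L.
  move=> L; rewrite /Gobj lerDl; apply: mulr_ge0 => //.
  by apply: sumr_ge0 => i _; exact: topmass_ge0.
have hv : v = 1 - Gobj P f l rho Lam by [].
split.
  move=> W hW; rewrite /list_privacy hv; have := low W hW; lra.
have [L0 [_ _ hL0]] := extend_set (sub0set [set: X])
  (ltac:(by rewrite cards0 cardsT hlX') : ((#|(set0 : {set X})| <= l) && (l <= #|[set: X]|))%N).
have hL0' : #|L0| == l by rewrite hL0.
case: (lerP rho (1/2)) => hr.
  pose W := fun (_ : X) (_ : bool) => (1/2 : R).
  have hQR : is_QR f rho W.
    split; [split => [x i|x] | move=> x]; rewrite /W.
    - lra.
    - rewrite big_bool /=; lra.
    - exact: hr.
  exists W; split; first by split => // x y.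
  apply/eqP; rewrite eq_le; apply/andP; split.
    rewrite /list_privacy hv; have := low W hQR; lra.
  have G0 : 0 <= Gobj P f l rho Lam by apply: le_trans (Gge Lam); exact: PX_ge0.
  have hM : forall i, \big[Num.max/0]_(L : {set X} | #|L| == l) \sum_(x in L) P x * W x i
                       <= Gobj P f l rho Lam / 2.
    move=> i; apply: bigmax_le; first lra.
    move=> L /eqP hL; rewrite /W -mulr_suml.
    have := Gge L; have := hmax L (ltac:(by rewrite hL)); rewrite /PX; lra.
  rewrite /list_privacy hv big_bool /=; have := hM true; have := hM false; lra.
pose W := fun x (i : bool) => if f x == i then rho else 1 - rho.
have hQR : is_QR f rho W.
  split; [split => [x i|x] | move=> x]; rewrite /W.
  - case: (f x == i); lra.
  - by rewrite big_bool /=; case: (f x) => /=; lra.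
  - by rewrite eqxx.
exists W; split.
  by split => // x y e; rewrite /W e.
apply/eqP; rewrite eq_le; apply/andP; split.
  rewrite /list_privacy hv; have := low W hQR; lra.
pose F i (L : {set X}) := \sum_(x in L) P x * W x i.
have Fge : forall i L, 0 <= F i L.
  move=> i L; apply: sumr_ge0 => x _; apply: mulr_ge0 => //; rewrite /W; case: (f x == i); lra.
have [L1 hL1 e1] := @eq_bigmax _ _ _ (0:R) L0 (fun L : {set X} => #|L| == l) (F true) hL0' (fun L _ => Fge true L).
have [L2 hL2 e2] := @eq_bigmax _ _ _ (0:R) L0 (fun L : {set X} => #|L| == l) (F false) hL0' (fun L _ => Fge false L).
have {hL1} hL1 : #|L1| = l := eqP hL1.
have {hL2} hL2 : #|L2| = l := eqP hL2.
rewrite /list_privacy hv big_bool /= e1 e2.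
pose s0 x := if x \in L1 then (if x \in L2 then Lm else (if f x then Tl else Bl))
             else if x \in L2 then (if f x then Bl else Tl) else Out.
have hr2 : 1 - rho <= rho by lra.
have hc : forall i, (cnt f i s0 <= l)%N.
  move=> i; rewrite -[l in (_ <= l)%N](_ : #|if i then L1 else L2| = l); last by case: i.
  rewrite card_sum /cnt; apply: leq_sum => x _; rewrite /s0 /kap.
  by case: i; case: (x \in L1); case: (x \in L2); case: (f x).
have [Lam' [hLam' hV]] := reach P0 hr2 rho1 rho0 (leqnn (nBs s0)) hc.
have hVs : F true L1 + F false L2 = Vs P rho s0.
  rewrite /F /Vs [\sum_(x in L1) _]big_mkcond [\sum_(x in L2) _]big_mkcond -[in LHS]big_split.
  apply: eq_bigr => x _; rewrite /s0 /W /wt.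
  case: (x \in L1); case: (x \in L2); case: (f x) => /=; lra.
have := hmax Lam' hLam'; lra.
Qed.
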